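(* Let $C\subset\mathbb{R}^N$ be closed and nonempty, let $h:\mathbb{R}^N\to\mathbb{R}$ be differentiable with $L$-Lipschitz gradient ($L>0$), and suppose $f:=h+\delta_C$ is a K\L{} function. Fix $\varepsilon>0$. Let $x^0\in\mathbb{R}^N$ and let $(x^k)$ be a bounded sequence generated by $$x^{k+1}\in\mathrm{proj}_C^{A_k}\big(x^k-\lambda_kA_k^{-1}\nabla h(x^k)\big),$$ where $A_k=P_k+\varepsilon I_N$, $P_k=\mathrm{proj}_{\mathcal S_+(\mathbb{R}^N)}(H_k)$ and $H_k\in\partial^2h(x^k)$, and the step sizes satisfy $0<\lambda_k\le\bar\lambda<\varepsilon/L$, $(\lambda_k)\notin\ell^1$, and $\sup_k\lambda_{k+1}/\lambda_k<+\infty$. Then $\sum_k\|x^{k+1}-x^k\|<\infty$ and $(x^k)$ converges to a critical point of $f$.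
   Context: $\delta_C$ is the indicator function of $C$ ($0$ on $C$, $+\infty$ outside). For a symmetric positive definite matrix $A$, $\mathrm{proj}_C^A(z)=\arg\min_{y\in C}\langle A(y-z),y-z\rangle$. $\mathcal S_+(\mathbb{R}^N)$ is the closed convex cone of symmetric positive semidefinite matrices and $\mathrm{proj}_{\mathcal S_+(\mathbb{R}^N)}$ the Frobenius-norm projection onto it. The generalized (Clarke) Hessian is $\partial^2h(x)=\mathrm{co}\{\lim_n\nabla^2h(x_n): \nabla h \text{ differentiable at } x_n,\ x_n\to x\}$. Critical point: $0\in\partial f(x)$, $\partial f$ the limiting Fréchet subdifferential. K\L{} function: proper lsc $f$ such that at every $x^*$ with $\partial f(x^* )\ne\emptyset$ there are $\eta\in]0,\infty]$, $\delta>0$ and a continuous concave $\varphi:[0,\eta[\to[0,\infty[$, $\varphi(0)=0$, $C^1$ with $\varphi'>0$ on $]0,\eta[$, with $\varphi'(f(x)-f(x^* ))\inf_{p\in\partial f(x)}\|p\|\ge1$ whenever $\|x-x^*\|<\delta$ and $f(x^* )<f(x)<f(x^* )+\eta$. *)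

(* Defs.v *)
From Stdlib Require Import Reals ClassicalEpsilon.
From mathcomp Require Import all_boot.
Set Implicit Arguments. Unset Strict Implicit.
Local Open Scope R_scope.

Definition vec (N : nat) := 'I_N -> R.
Definition mat (N : nat) := 'I_N -> 'I_N -> R.

Section Lin.
Variable N : nat.
Definition vsum (F : 'I_N -> R) : R := \big[Rplus/0]_(i < N) F i.
Definition dot (u v : vec N) : R := vsum (fun i => u i * v i).
Definition vnorm (v : vec N) : R := sqrt (dot v v).
Definition vzero : vec N := fun _ => 0.
Definition vsub (u v : vec N) : vec N := fun i => u i - v i.
Definition vscale (a : R) (u : vec N) : vec N := fun i => a * u i.
Definition mulmv (A : mat N) (v : vec N) : vec N := fun i => vsum (fun j => A i j * v j).
Definition idm : mat N := fun i j => if i == j then 1 else 0.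
Definition madd (A B : mat N) : mat N := fun i j => A i j + B i j.
Definition msub (A B : mat N) : mat N := fun i j => A i j - B i j.
Definition mscale (a : R) (A : mat N) : mat N := fun i j => a * A i j.
Definition frob (A : mat N) : R := sqrt (vsum (fun i => vsum (fun j => A i j * A i j))).

Definition vconv (x : nat -> vec N) (l : vec N) : Prop :=
  forall e, 0 < e -> exists K, forall k, (K <= k)%nat -> vnorm (vsub (x k) l) < e.
Definition mconv (M : nat -> mat N) (l : mat N) : Prop :=
  forall e, 0 < e -> exists K, forall k, (K <= k)%nat -> frob (msub (M k) l) < e.

Definition closed_vset (C : vec N -> Prop) : Prop :=
  forall (x : nat -> vec N) (l : vec N), (forall k, C (x k)) -> vconv x l -> C l.

Definition has_gradient (h : vec N -> R) (x g : vec N) : Prop :=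
  forall e, 0 < e -> exists d, 0 < d /\ forall y, vnorm (vsub y x) < d ->
    Rabs (h y - h x - dot g (vsub y x)) <= e * vnorm (vsub y x).
Definition lipschitz (G : vec N -> vec N) (L : R) : Prop :=
  forall x y, vnorm (vsub (G x) (G y)) <= L * vnorm (vsub x y).
Definition has_jacobian (G : vec N -> vec N) (x : vec N) (J : mat N) : Prop :=
  forall e, 0 < e -> exists d, 0 < d /\ forall y, vnorm (vsub y x) < d ->
    vnorm (vsub (vsub (G y) (G x)) (mulmv J (vsub y x))) <= e * vnorm (vsub y x).

Definition hess_limits (gradh : vec N -> vec N) (x : vec N) (J : mat N) : Prop :=
  exists (xn : nat -> vec N) (Jn : nat -> mat N),
    vconv xn x /\ (forall n, has_jacobian gradh (xn n) (Jn n)) /\ mconv Jn J.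
Definition mat_co (S : mat N -> Prop) (M : mat N) : Prop :=
  exists (m : nat) (w : 'I_m -> R) (Ms : 'I_m -> mat N),
    (forall l, 0 <= w l) /\ \big[Rplus/0]_(l < m) w l = 1 /\ (forall l, S (Ms l)) /\
    forall i j, M i j = \big[Rplus/0]_(l < m) (w l * Ms l i j).
Definition clarke_hessian (gradh : vec N -> vec N) (x : vec N) (H : mat N) : Prop :=
  mat_co (hess_limits gradh x) H.

Definition psd (M : mat N) : Prop :=
  (forall i j, M i j = M j i) /\ forall v, 0 <= dot v (mulmv M v).
Definition is_proj_psd (H P : mat N) : Prop :=
  psd P /\ forall Q, psd Q -> frob (msub H P) <= frob (msub H Q).

Definition in_proj_A (C : vec N -> Prop) (A : mat N) (z y : vec N) : Prop :=
  C y /\ forall y', C y' ->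
    dot (mulmv A (vsub y z)) (vsub y z) <= dot (mulmv A (vsub y' z)) (vsub y' z).

End Lin.

(* extended reals ]-oo,+oo] (only +oo is needed: functions are proper_fun) *)
Inductive ereal := EFin (r : R) | EPInf.
Definition Rlt_e (r : R) (e : ereal) : Prop :=
  match e with EFin s => r < s | EPInf => True end.

Section Nonsmooth.
Variable N : nat.
Definition efun := vec N -> ereal.

Definition h_plus_ind (h : vec N -> R) (C : vec N -> Prop) : efun :=
  fun x => if excluded_middle_informative (C x) then EFin (h x) else EPInf.

Definition frechet_subdiff (f : efun) (x v : vec N) : Prop :=
  exists fx, f x = EFin fx /\
  forall e, 0 < e -> exists d, 0 < d /\ forall y, vnorm (vsub y x) < d ->
    match f y with
    | EFin fy => fx + dot v (vsub y x) - e * vnorm (vsub y x) <= fy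
    | EPInf => True end.

Definition limiting_subdiff (f : efun) (x v : vec N) : Prop :=
  exists fx, f x = EFin fx /\
  exists (xn : nat -> vec N) (fxn : nat -> R) (vn : nat -> vec N),
    vconv xn x /\ (forall n, f (xn n) = EFin (fxn n)) /\ Un_cv fxn fx /\
    (forall n, frechet_subdiff f (xn n) (vn n)) /\ vconv vn v.

Definition critical (f : efun) (x : vec N) : Prop := limiting_subdiff f x (@vzero N).

Definition proper_fun (f : efun) : Prop := exists x r, f x = EFin r.
Definition lsc (f : efun) : Prop :=
  forall x r, Rlt_e r (f x) -> exists d, 0 < d /\
    forall y, vnorm (vsub y x) < d -> Rlt_e r (f y).

Definition KL (f : efun) : Prop :=
  proper_fun f /\ lsc f /\
  forall xs, (exists p, limiting_subdiff f xs p) ->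
  forall fxs, f xs = EFin fxs ->
  exists (eta : ereal) (delta : R) (phi phi' : R -> R),
    Rlt_e 0 eta /\ 0 < delta /\
    phi 0 = 0 /\
    (forall t, 0 <= t -> Rlt_e t eta -> 0 <= phi t) /\
    (forall t, 0 <= t -> Rlt_e t eta -> forall e, 0 < e -> exists d, 0 < d /\
       forall s, 0 <= s -> Rlt_e s eta -> Rabs (s - t) < d -> Rabs (phi s - phi t) < e) /\
    (forall a b th, 0 <= a -> Rlt_e a eta -> 0 <= b -> Rlt_e b eta -> 0 <= th <= 1 ->
       th * phi a + (1 - th) * phi b <= phi (th * a + (1 - th) * b)) /\
    (forall t, 0 < t -> Rlt_e t eta ->
       derivable_pt_lim phi t (phi' t) /\ continuity_pt phi' t /\ 0 < phi' t) /\
    (forall x fx, vnorm (vsub x xs) < delta -> f x = EFin fx -> fxs < fx ->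
       Rlt_e (fx - fxs) eta ->
       forall p, limiting_subdiff f x p -> 1 <= phi' (fx - fxs) * vnorm p).

End Nonsmooth.

(* Main.v *)
Require Import Defs.
From Stdlib Require Import Reals ClassicalEpsilon.
From mathcomp Require Import all_boot.
From Stdlib Require Import FunctionalExtensionality Lra Psatz Classical.
From HB Require Import structures.
From mathcomp Require Import zify.
Set Implicit Arguments. Unset Strict Implicit.
Local Open Scope R_scope.

HB.instance Definition _ := Monoid.isComLaw.Build R 0 Rplus (fun a b c => esym (Rplus_assoc a b c)) Rplus_comm Rplus_0_l.

Section Sums.
Variable N : nat.
Implicit Types F G : 'I_N -> R.

Lemma vsum_add F G : vsum (fun i => F i + G i) = vsum F + vsum G.
Proof. by rewrite /vsum big_split. Qed.

Lemma vsum_scal a F : vsum (fun i => a * F i) = a * vsum F.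
Proof.
rewrite /vsum; apply: (big_ind2 (fun x y => x = a * y)); first ring.
  by move=> x1 x2 y1 y2 -> ->; ring.
done.
Qed.

Lemma vsum_ext F G : (forall i, F i = G i) -> vsum F = vsum G.
Proof. by move=> H; rewrite /vsum; apply: eq_bigr. Qed.

Lemma vsum_opp F : vsum (fun i => - F i) = - vsum F.
Proof. have -> : - vsum F = (-1) * vsum F by ring.
rewrite -vsum_scal; apply vsum_ext => i; ring. Qed.

Lemma vsum_sub F G : vsum (fun i => F i - G i) = vsum F - vsum G.
Proof. rewrite /Rminus -vsum_opp -vsum_add; by apply vsum_ext. Qed.

Lemma vsum_le F G : (forall i, F i <= G i) -> vsum F <= vsum G.
Proof.
move=> H; rewrite /vsum; apply: (big_ind2 Rle); first lra.
  by move=> x1 x2 y1 y2; lra.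
by move=> i _; apply H.
Qed.

Lemma vsum_ge0 F : (forall i, 0 <= F i) -> 0 <= vsum F.
Proof.
move=> H; rewrite /vsum; apply: (big_ind (fun x => 0 <= x)); first lra.
  by move=> x y; lra.
by move=> i _; apply H.
Qed.

Lemma vsum_zero : vsum (fun _ : 'I_N => 0) = 0.
Proof. rewrite /vsum; apply: (big_ind (fun x => x = 0)) => //. by move=> x y -> ->; ring. Qed.

Lemma vsum_abs F : Rabs (vsum F) <= vsum (fun i => Rabs (F i)).
Proof.
rewrite /vsum; apply: (big_ind2 (fun x y => Rabs x <= y)); first by rewrite Rabs_R0; lra.
  move=> x1 x2 y1 y2 h1 h2; have := Rabs_triang x1 y1; lra.
by move=> i _; lra.
Qed.

Lemma vsum_term F i : (forall j, 0 <= F j) -> F i <= vsum F.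
Proof.
move=> H; rewrite /vsum (bigD1 i) //=.
rewrite -{1}(Rplus_0_r (F i)); apply Rplus_le_compat_l.
  apply: (big_ind (fun x => 0 <= x)); first lra.
  by move=> x y; lra.
  by move=> j _; apply H.
Qed.

Lemma vsum_delta i (v : 'I_N -> R) : vsum (fun j => (if i == j then 1 else 0) * v j) = v i.
Proof.
rewrite /vsum (bigD1 i) //= eqxx.
have -> : \big[Rplus/0]_(j | j != i) ((if i == j then 1 else 0) * v j) = 0.
  apply: (big_ind (fun x => x = 0)) => //; first by move=> x y -> ->; ring.
  move=> j /negbTE; rewrite eq_sym => ->; ring.
ring.
Qed.

Lemma vsum_exch (F : 'I_N -> 'I_N -> R) :
  vsum (fun i => vsum (fun j => F i j)) = vsum (fun j => vsum (fun i => F i j)).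
Proof. by rewrite /vsum exchange_big. Qed.

End Sums.


Section Vec.
Variable N : nat.
Implicit Types u v w : vec N.

Lemma dot_sym u v : dot u v = dot v u.
Proof. apply vsum_ext => i; ring. Qed.

Lemma dot_ge0 v : 0 <= dot v v.
Proof. apply vsum_ge0 => i; nra. Qed.

Lemma vnorm_ge0 v : 0 <= vnorm v.
Proof. apply sqrt_pos. Qed.

Lemma vnorm_sq v : vnorm v * vnorm v = dot v v.
Proof. rewrite /vnorm sqrt_sqrt //; apply dot_ge0. Qed.

Lemma vnorm_le v c : 0 <= c -> dot v v <= c * c -> vnorm v <= c.
Proof. move=> c0 H; rewrite /vnorm -(sqrt_square c) //; by apply sqrt_le_1_alt. Qed.

Lemma vnorm_lt v c : 0 <= c -> dot v v < c * c -> vnorm v < c.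
Proof. move=> c0 H; rewrite /vnorm -(sqrt_square c) //; apply sqrt_lt_1_alt; split=> //; apply dot_ge0. Qed.

Lemma sq_le_vnorm v c : 0 <= c -> vnorm v <= c -> dot v v <= c * c.
Proof. move=> c0 H; rewrite -vnorm_sq; have := vnorm_ge0 v; nra. Qed.

Lemma CS u v : Rabs (dot u v) <= vnorm u * vnorm v.
Proof.
have key : forall t, 0 <= dot u u - 2 * t * dot u v + t * t * dot v v.
  move=> t; have -> : dot u u - 2 * t * dot u v + t * t * dot v v =
     dot (fun i => u i - t * v i) (fun i => u i - t * v i).
    rewrite /dot -!vsum_scal -vsum_sub -vsum_add; apply vsum_ext => i; ring.
  apply dot_ge0.
have hu := vnorm_sq u; have hv := vnorm_sq v.
have gu := vnorm_ge0 u; have gv := vnorm_ge0 v.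
suff : dot u v * dot u v <= (vnorm u * vnorm v) * (vnorm u * vnorm v).
  move=> h; apply Rsqr_le_abs_0 in h; rewrite (Rabs_right (_ * _)) in h; try lra.
  have : 0 <= vnorm u * vnorm v by nra. lra.
have [hz|hnz] := Req_dec (dot v v) 0.
  have : dot u v = 0.
    case: (Req_dec (dot u v) 0) => // ne.
    have := key ((dot u u + 1) / (2 * dot u v)).
    have e : 2 * ((dot u u + 1) / (2 * dot u v)) * dot u v = dot u u + 1 by field.
    rewrite hz e; lra.
  move=> ->; nra.
have vp : 0 < dot v v by have := dot_ge0 v; lra.
have := key (dot u v / dot v v).
move=> h.
have : 0 <= (dot u u * dot v v - dot u v * dot u v) / dot v v.
  have -> : (dot u u * dot v v - dot u v * dot u v) / dot v v =
     dot u u - 2 * (dot u v / dot v v) * dot u v + dot u v / dot v v * (dot u v / dot v v) * dot v v by field; lra.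
  done.
move=> h2.
have : 0 <= dot u u * dot v v - dot u v * dot u v.
  have := Rmult_le_compat_r (dot v v) _ _ (Rlt_le _ _ vp) h2.
  rewrite Rmult_0_l /Rdiv Rmult_assoc Rinv_l; lra.
nra.
Qed.

Lemma dot_le_norm u v : dot u v <= vnorm u * vnorm v.
Proof. have := CS u v; have := Rle_abs (dot u v); lra. Qed.

Lemma vnorm_add u v : vnorm (fun i => u i + v i) <= vnorm u + vnorm v.
Proof.
apply vnorm_le; first by have := vnorm_ge0 u; have := vnorm_ge0 v; lra.
have -> : dot (fun i => u i + v i) (fun i => u i + v i) = dot u u + 2 * dot u v + dot v v.
  rewrite /dot -vsum_scal -!vsum_add; apply vsum_ext => i; ring.
have := dot_le_norm u v; have := vnorm_sq u; have := vnorm_sq v; nra.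
Qed.

Lemma vnorm_scale a u : vnorm (fun i => a * u i) = Rabs a * vnorm u.
Proof.
rewrite /vnorm.
have -> : dot (fun i => a * u i) (fun i => a * u i) = (a * a) * dot u u.
  rewrite /dot -vsum_scal; apply vsum_ext => i; ring.
rewrite sqrt_mult; [|nra|apply dot_ge0].
by rewrite (sqrt_Rsqr_abs a). 
Qed.

Lemma vnorm_ext u v : (forall i, u i = v i) -> vnorm u = vnorm v.
Proof. by move=> H; rewrite (functional_extensionality u v H). Qed.

Lemma vnorm_sub_sym u v : vnorm (vsub u v) = vnorm (vsub v u).
Proof.
have -> : vsub u v = (fun i => (-1) * vsub v u i) by apply: functional_extensionality => i; rewrite /vsub; ring.
by rewrite vnorm_scale Rabs_Ropp Rabs_R1 Rmult_1_l.
Qed.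

Lemma vnorm_tri u v w : vnorm (vsub u w) <= vnorm (vsub u v) + vnorm (vsub v w).
Proof.
have -> : vsub u w = (fun i => vsub u v i + vsub v w i) by apply: functional_extensionality => i; rewrite /vsub; ring.
apply vnorm_add.
Qed.

Lemma vnorm_subr u v : vnorm (vsub u v) <= vnorm u + vnorm v.
Proof.
have -> : vsub u v = (fun i => u i + (-1) * v i) by apply: functional_extensionality => i; rewrite /vsub; ring.
by have := vnorm_add u (fun i => (-1) * v i); rewrite vnorm_scale Rabs_Ropp Rabs_R1; lra.
Qed.

Lemma coord_le v i : Rabs (v i) <= vnorm v.
Proof.
rewrite -(sqrt_square (Rabs (v i))); last by apply Rabs_pos.
apply sqrt_le_1_alt.
have -> : Rabs (v i) * Rabs (v i) = v i * v i.
  by rewrite -Rabs_mult Rabs_right //; apply Rle_ge; nra.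
by apply (vsum_term (F := fun j => v j * v j)) => j; nra.
Qed.

Lemma vnorm_le_sum v : vnorm v <= vsum (fun i => Rabs (v i)).
Proof.
apply vnorm_le; first by apply vsum_ge0 => i; apply Rabs_pos.
rewrite {2}/vsum.
have h : forall i, v i * v i <= Rabs (v i) * vsum (fun j => Rabs (v j)).
  move=> i; have := @vsum_term _ (fun j => Rabs (v j)) i (fun j => Rabs_pos _).
  have := Rabs_pos (v i).
  have e : v i * v i = Rabs (v i) * Rabs (v i) by rewrite -Rabs_mult Rabs_right //; apply Rle_ge; nra.
  rewrite e; nra.
have := vsum_le h.
have -> : vsum (fun i => Rabs (v i) * vsum (fun j => Rabs (v j))) = vsum (fun j => Rabs (v j)) * vsum (fun j => Rabs (v j)).
  rewrite -vsum_scal; apply vsum_ext => i; ring.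
done.
Qed.

Lemma frob_ge0 (A : mat N) : 0 <= frob A.
Proof. apply sqrt_pos. Qed.

Lemma frob_sq (A : mat N) : frob A * frob A = vsum (fun i => vsum (fun j => A i j * A i j)).
Proof. rewrite /frob sqrt_sqrt //; apply vsum_ge0 => i; apply vsum_ge0 => j; nra. Qed.

Lemma mulmv_norm (A : mat N) v : vnorm (mulmv A v) <= frob A * vnorm v.
Proof.
apply vnorm_le; first by have := frob_ge0 A; have := vnorm_ge0 v; nra.
have -> : frob A * vnorm v * (frob A * vnorm v) = vsum (fun i => dot (A i) (A i) * dot v v).
  rewrite (vsum_ext (G := fun i => dot v v * dot (A i) (A i))); last by move=> i; ring.
  rewrite vsum_scal.
  change (vsum (fun i => dot (A i) (A i))) with (vsum (fun i => vsum (fun j => A i j * A i j))).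
  rewrite -frob_sq -vnorm_sq; ring.
apply vsum_le => i.
have h := CS (A i) v.
have e : mulmv A v i = dot (A i) v by [].
rewrite e -!vnorm_sq.
have := Rabs_pos (dot (A i) v).
have e2 : dot (A i) v * dot (A i) v = Rabs (dot (A i) v) * Rabs (dot (A i) v)
  by rewrite -Rabs_mult Rabs_right //; apply Rle_ge; nra.
rewrite e2; have := vnorm_ge0 (A i); have := vnorm_ge0 v; nra.
Qed.

Lemma entry_le (A : mat N) i j : Rabs (A i j) <= frob A.
Proof.
apply: Rle_trans (coord_le (A i) j) _.
rewrite /vnorm /frob; apply sqrt_le_1_alt.
by apply (@vsum_term _ (fun k => dot (A k) (A k))) => k; apply dot_ge0.
Qed.

Lemma frob_bound (A : mat N) c : (forall i j, Rabs (A i j) <= c) ->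
  frob A <= sqrt (vsum (fun i : 'I_N => vsum (fun j : 'I_N => c * c))).
Proof.
move=> H; apply sqrt_le_1_alt; apply vsum_le => i; apply vsum_le => j.
have := H i j; have := Rabs_pos (A i j).
have e2 : A i j * A i j = Rabs (A i j) * Rabs (A i j)
  by rewrite -Rabs_mult Rabs_right //; apply Rle_ge; nra.
rewrite e2; nra.
Qed.

Lemma dot_mulmv_sym (A : mat N) u v : (forall i j, A i j = A j i) ->
  dot (mulmv A u) v = dot u (mulmv A v).
Proof.
move=> S.
rewrite /dot /mulmv.
rewrite (vsum_ext (G := fun i => vsum (fun j => v i * (A i j * u j)))); last first.
  by move=> i; rewrite vsum_scal Rmult_comm.
rewrite (vsum_ext (F := fun i => u i * vsum (fun j => A i j * v j))
    (G := fun i => vsum (fun j => u i * (A i j * v j)))); last first.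
  by move=> i; rewrite vsum_scal.
rewrite [in RHS]vsum_exch; apply vsum_ext => i; apply vsum_ext => j.
rewrite (S i j); ring.
Qed.

Lemma mulmv_lin (A : mat N) a b u w i :
  mulmv A (fun k => a * u k + b * w k) i = a * mulmv A u i + b * mulmv A w i.
Proof.
rewrite /mulmv -!vsum_scal -vsum_add; apply vsum_ext => j; ring.
Qed.

Lemma mulmv_A (P : mat N) e v i :
  mulmv (madd P (mscale e (@idm N))) v i = mulmv P v i + e * v i.
Proof.
rewrite /mulmv /madd /mscale.
rewrite (vsum_ext (G := fun j => P i j * v j + e * ((if i == j then 1 else 0) * v j))).
  by rewrite vsum_add vsum_scal vsum_delta.
move=> j; rewrite /idm; ring.
Qed.

End Vec.


Lemma Rabs_le_between x a : Rabs x <= a <-> -a <= x <= a.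
Proof. rewrite /Rabs; destruct (Rcase_abs x); split; intros; lra. Qed.

Lemma Rabs_lt_between x a : Rabs x < a <-> -a < x < a.
Proof. rewrite /Rabs; destruct (Rcase_abs x); split; intros; lra. Qed.

Section Desc.
Variable N : nat.
Variable h : vec N -> R.
Variable gradh : vec N -> vec N.
Hypothesis hg : forall z, has_gradient h z (gradh z).

Lemma h_cont x e : 0 < e -> exists d, 0 < d /\ forall y, vnorm (vsub y x) < d -> Rabs (h y - h x) < e.
Proof.
move=> ep; have [d1 [d1p Hd]] := hg x Rlt_0_1.
set g := vnorm (gradh x).
have gp : 0 <= g by apply vnorm_ge0.
exists (Rmin d1 (e / (g + 2))); split.
  apply Rmin_pos => //; apply Rdiv_lt_0_compat; lra.
move=> y hy.
have h1 := Rmin_l d1 (e / (g + 2)); have h2 := Rmin_r d1 (e / (g + 2)).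
have := Hd y ltac:(lra).
have := CS (gradh x) (vsub y x).
set n := vnorm (vsub y x) in hy *; set D := dot _ _.
have np : 0 <= n by apply vnorm_ge0.
move=> hcs hgr.
have hn : n * (g + 2) < e.
  have : n < e / (g + 2) by lra.
  move=> H; apply (Rmult_lt_compat_r (g + 2)) in H; last lra.
  by rewrite /Rdiv Rmult_assoc Rinv_l ?Rmult_1_r in H; lra.
have := Rabs_triang_inv (h y - h x) D.
have := Rabs_triang (h y - h x - D) D.
have e1 : h y - h x - D + D = h y - h x by ring.
rewrite e1 => t1 t2.
change (vnorm (gradh x)) with g in hcs. nra.
Qed.

Definition xt (x u : vec N) (t : R) : vec N := fun i => x i + t * u i.

Lemma deriv_line x u t : derivable_pt_lim (fun s => h (xt x u s)) t (dot (gradh (xt x u t)) u).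
Proof.
move=> e ep.
set nu := vnorm u.
have nup : 0 <= nu by apply vnorm_ge0.
have e'p : 0 < e / (2 * (nu + 1)) by apply Rdiv_lt_0_compat; lra.
have [d1 [d1p Hd]] := hg (xt x u t) e'p.
have dp : 0 < d1 / (nu + 1) by apply Rdiv_lt_0_compat; lra.
exists (mkposreal _ dp) => s sn0 /= hs.
have ev : vsub (xt x u (t + s)) (xt x u t) = (fun i => s * u i).
  by apply: functional_extensionality => i; rewrite /vsub /xt; ring.
have hsp : 0 < Rabs s by apply Rabs_pos_lt.
have hn : vnorm (vsub (xt x u (t + s)) (xt x u t)) = Rabs s * nu by rewrite ev vnorm_scale.
have hlt : Rabs s * nu < d1.
  have : Rabs s * (nu + 1) < d1.
    have := Rmult_lt_compat_r (nu + 1) _ _ ltac:(lra) hs.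
    by rewrite /Rdiv Rmult_assoc Rinv_l ?Rmult_1_r; lra.
  nra.
have := Hd (xt x u (t + s)) ltac:(lra).
rewrite hn ev.
have ed : dot (gradh (xt x u t)) (fun i => s * u i) = s * dot (gradh (xt x u t)) u.
  rewrite /dot -vsum_scal; apply vsum_ext => i; ring.
rewrite ed.
set A := h (xt x u (t + s)) - h (xt x u t).
set G := dot _ u.
move=> H.
have -> : A / s - G = (A - s * G) / s by field.
rewrite /Rdiv Rabs_mult Rabs_inv.
apply (Rmult_lt_reg_r (Rabs s)) => //.
rewrite /Rdiv Rmult_assoc Rinv_l; last lra.
rewrite Rmult_1_r.
have : e / (2 * (nu + 1)) * (Rabs s * nu) < e * Rabs s.
  have -> : e / (2 * (nu + 1)) * (Rabs s * nu) = (e * Rabs s) * (nu / (2 * (nu + 1))) by field; lra.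
  have : nu / (2 * (nu + 1)) < 1.
    apply (Rmult_lt_reg_r (2 * (nu + 1))); first lra.
    rewrite /Rdiv Rmult_assoc Rinv_l; lra.
  have : 0 < e * Rabs s by nra.
  nra.
lra.
Qed.

Lemma mvt_le (F F' : R -> R) : (forall c, 0 <= c <= 1 -> derivable_pt_lim F c (F' c)) ->
  (forall c, 0 < c < 1 -> F' c <= 0) -> F 1 <= F 0.
Proof.
move=> D H; have [c [e hc]] := MVT_cor2 F F' 0 1 Rlt_0_1 D.
have := H c hc; lra.
Qed.

Hypothesis L : R.
Hypothesis Lp : 0 <= L.
Hypothesis lip : lipschitz gradh L.

Lemma descent x y :
  Rabs (h y - h x - dot (gradh x) (vsub y x)) <= L / 2 * (vnorm (vsub y x) * vnorm (vsub y x)).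
Proof.
set u := vsub y x.
have ey : y = xt x u 1 by apply: functional_extensionality => i; rewrite /xt /u /vsub; ring.
have ex : x = xt x u 0 by apply: functional_extensionality => i; rewrite /xt; ring.
set nu := vnorm u.
have key : forall t, 0 <= t -> Rabs (dot (gradh (xt x u t)) u - dot (gradh x) u) <= L * t * (nu * nu).
  move=> t tp.
  have -> : dot (gradh (xt x u t)) u - dot (gradh x) u = dot (vsub (gradh (xt x u t)) (gradh x)) u.
    by rewrite /dot -vsum_sub; apply vsum_ext => i; rewrite /vsub; ring.
  apply: Rle_trans (CS _ _) _.
  have := lip (xt x u t) x.
  have -> : vsub (xt x u t) x = (fun i => t * u i).
    by apply: functional_extensionality => i; rewrite /vsub /xt; ring.
  rewrite vnorm_scale Rabs_right; last lra.
  have := vnorm_ge0 (vsub (gradh (xt x u t)) (gradh x)).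
  rewrite -/nu; have : 0 <= nu by apply vnorm_ge0.
  nra.
set K := L / 2 * (nu * nu).
set G0 := dot (gradh x) u.
set F1 := fun s => h (xt x u s).
have D1 : forall c, derivable_pt_lim F1 c (dot (gradh (xt x u c)) u) by move=> c; apply deriv_line.
have DP : forall a b c, derivable_pt_lim (plus_fct (mult_real_fct a id) (mult_real_fct b (mult_fct id id))) c
     (a * 1 + b * (1 * id c + id c * 1)).
  move=> a b c; apply derivable_pt_lim_plus; apply derivable_pt_lim_scal.
    by apply derivable_pt_lim_id.
  by apply derivable_pt_lim_mult; apply derivable_pt_lim_id.
have up : F1 1 - F1 0 - G0 <= K.
  have := mvt_le (F := minus_fct F1 (plus_fct (mult_real_fct G0 id) (mult_real_fct K (mult_fct id id))))
     (F' := fun c => dot (gradh (xt x u c)) u - (G0 * 1 + K * (1 * id c + id c * 1))).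
  rewrite /minus_fct /plus_fct /mult_real_fct /mult_fct /id.
  move=> H; have : F1 1 - (G0 * 1 + K * (1 * 1)) <= F1 0 - (G0 * 0 + K * (0 * 0)).
    apply H.
      by move=> c _; apply derivable_pt_lim_minus => //; apply DP.
    move=> c hc; have := key c ltac:(lra); move/Rabs_le_between => [_ hh].
    rewrite /K; rewrite -/G0 in hh; nra.
  lra.
have lo : - K <= F1 1 - F1 0 - G0.
  have := mvt_le (F := minus_fct (plus_fct (mult_real_fct G0 id) (mult_real_fct (- K) (mult_fct id id))) F1)
     (F' := fun c => (G0 * 1 + (- K) * (1 * id c + id c * 1)) - dot (gradh (xt x u c)) u).
  rewrite /minus_fct /plus_fct /mult_real_fct /mult_fct /id.
  move=> H; have : (G0 * 1 + - K * (1 * 1)) - F1 1 <= (G0 * 0 + - K * (0 * 0)) - F1 0.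
    apply H.
      by move=> c _; apply derivable_pt_lim_minus => //; apply DP.
    move=> c hc; have := key c ltac:(lra); move/Rabs_le_between => [hh _].
    rewrite /K; rewrite -/G0 in hh; nra.
  lra.
rewrite {1}ey {2}ex.
apply Rabs_le_between; split; rewrite /F1 in up lo; lra.
Qed.

End Desc.


Section Mat.
Variable N : nat.
Variable gradh : vec N -> vec N.
Variable L : R.
Hypothesis Lp : 0 < L.
Hypothesis lip : lipschitz gradh L.

Definition ev (j : 'I_N) : vec N := fun k => if j == k then 1 else 0.

Lemma vnorm_ev j : vnorm (ev j) = 1.
Proof.
rewrite /vnorm /dot (vsum_ext (G := fun k => (if j == k then 1 else 0) * ev j k)) //.
rewrite vsum_delta /ev eqxx sqrt_1 //.
Qed.

Lemma mulmv_ev (J : mat N) i j : mulmv J (ev j) i = J i j.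
Proof.
rewrite /mulmv (vsum_ext (G := fun k => (if j == k then 1 else 0) * J i k)).
  by rewrite vsum_delta.
by move=> k; rewrite /ev; ring.
Qed.

Lemma jac_bound x J : has_jacobian gradh x J -> forall w, vnorm (mulmv J w) <= L * vnorm w.
Proof.
move=> HJ w.
apply Rnot_lt_le => hlt.
set a := vnorm (mulmv J w) in hlt *; set b := vnorm w in hlt *.
have bp : 0 <= b by apply vnorm_ge0.
have ap : 0 <= a by apply vnorm_ge0.
have bpos : 0 < b.
  destruct (Rle_lt_or_eq_dec 0 b bp) as [|b0]; first done.
  exfalso; have hh := mulmv_norm J w; change (a <= frob J * b) in hh; rewrite -b0 in hlt hh; lra.
set e := (a - L * b) / (2 * b).
have ep : 0 < e by apply Rdiv_lt_0_compat; lra.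
have [d [dp Hd]] := HJ e ep.
set t := d / (2 * b).
have tp : 0 < t by apply Rdiv_lt_0_compat; lra.
set y : vec N := fun i => x i + t * w i.
have ey : vsub y x = (fun i => t * w i) by apply: functional_extensionality => i; rewrite /vsub /y; ring.
have ny : vnorm (vsub y x) = t * b by rewrite ey vnorm_scale Rabs_right; [done|lra].
have tb0 : t * b = d / 2 by rewrite /t; field; lra.
have tb : t * b < d by lra.
have H1 := Hd y ltac:(lra).
have H2 := lip y x.
rewrite ny in H1 H2.
have hJ : mulmv J (vsub y x) = (fun i => t * mulmv J w i).
  apply: functional_extensionality => i; rewrite ey /mulmv -vsum_scal; apply vsum_ext => k; ring.
rewrite hJ in H1.
have := @vnorm_tri _ (fun i => t * mulmv J w i) (vsub (gradh y) (gradh x)) (@vzero N).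
have -> : vsub (fun i => t * mulmv J w i) (@vzero N) = (fun i => t * mulmv J w i)
  by apply: functional_extensionality => i; rewrite /vsub /vzero; ring.
rewrite vnorm_scale Rabs_right; last lra.
rewrite vnorm_sub_sym.
have -> : vsub (vsub (gradh y) (gradh x)) (@vzero N) = vsub (gradh y) (gradh x)
  by apply: functional_extensionality => i; rewrite /vsub /vzero; ring.
rewrite -/a => H3.
have : t * a <= e * (t * b) + L * (t * b) by lra.
have -> : e * (t * b) = t * ((a - L * b) / 2) by rewrite /e; field; lra.
nra.
Qed.

Lemma jac_entry x J : has_jacobian gradh x J -> forall i j, Rabs (J i j) <= L.
Proof.
move=> HJ i j; rewrite -mulmv_ev.
apply: Rle_trans (coord_le _ _) _.
by have := jac_bound HJ (ev j); rewrite vnorm_ev Rmult_1_r.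
Qed.

Lemma hlim_entry x J : hess_limits gradh x J -> forall i j, Rabs (J i j) <= L.
Proof.
move=> [xn [Jn [_ [HJ HC]]]] i j.
apply Rnot_lt_le => hlt.
have [K HK] := HC (Rabs (J i j) - L) ltac:(lra).
have h1 := HK K (leqnn K).
have h2 := entry_le (msub (Jn K) J) i j.
have h3 := jac_entry (HJ K) i j.
have h4 : Rabs (J i j) <= Rabs (Jn K i j) + Rabs (J i j - Jn K i j).
  have := Rabs_triang (Jn K i j) (J i j - Jn K i j).
  by replace (Jn K i j + (J i j - Jn K i j)) with (J i j) by ring.
rewrite Rabs_minus_sym in h4. change (Rabs (Jn K i j - J i j) <= frob (msub (Jn K) J)) in h2.
lra.
Qed.

Lemma clarke_entry x H : clarke_hessian gradh x H -> forall i j, Rabs (H i j) <= L.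
Proof.
move=> [m [w [Ms [wp [ws [HM He]]]]]] i j.
rewrite He.
change (\big[Rplus/0]_(l < m) (w l * Ms l i j)) with (vsum (fun l : 'I_m => w l * Ms l i j)).
apply: Rle_trans (vsum_abs _) _.
have -> : L = vsum (fun l : 'I_m => w l * L).
  rewrite (vsum_ext (G := fun l => L * w l)); last by move=> l; ring.
  rewrite vsum_scal; change (vsum w) with (\big[Rplus/0]_(l < m) w l); rewrite ws; ring.
apply vsum_le => l.
rewrite Rabs_mult Rabs_right; last by apply Rle_ge.
apply Rmult_le_compat_l => //.
by apply: hlim_entry (HM l) i j.
Qed.

End Mat.

Section Psd.
Variable N : nat.

Lemma psd0 : psd (fun _ _ : 'I_N => 0).
Proof.
split => // v.
rewrite /dot /mulmv (vsum_ext (G := fun _ => 0)) ?vsum_zero; first lra.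
by move=> i; rewrite (vsum_ext (G := fun _ => 0)) ?vsum_zero; [ring| move=> j; ring].
Qed.

Lemma proj_bound (H P : mat N) : is_proj_psd H P -> frob P * frob P <= 4 * (frob H * frob H).
Proof.
move=> [_ HP].
have h := HP _ psd0.
have e0 : msub H (fun _ _ => 0) = H.
  by apply: functional_extensionality => i; apply: functional_extensionality => j; rewrite /msub; ring.
rewrite e0 in h.
have h2 : frob (msub H P) * frob (msub H P) <= frob H * frob H.
  have := frob_ge0 (msub H P); nra.
rewrite !frob_sq in h2 *.
have : vsum (fun i => vsum (fun j => P i j * P i j)) <=
       vsum (fun i => vsum (fun j => 2 * (msub H P i j * msub H P i j) + 2 * (H i j * H i j))).
  apply vsum_le => i; apply vsum_le => j; rewrite /msub; have := Rle_0_sqr (2 * H i j - P i j); rewrite /Rsqr; nra.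
rewrite (vsum_ext (F := fun i => vsum (fun j => 2 * (msub H P i j * msub H P i j) + 2 * (H i j * H i j)))
  (G := fun i => 2 * vsum (fun j => msub H P i j * msub H P i j) + 2 * vsum (fun j => H i j * H i j))).
  rewrite vsum_add !vsum_scal; lra.
move=> i; rewrite vsum_add !vsum_scal //.
Qed.

End Psd.


Definition sincr (t : nat -> nat) := forall n, (t n < t (S n))%coq_nat.

Lemma sincr_ge t : sincr t -> forall n, (n <= t n)%coq_nat.
Proof. move=> H; elim=> [|n IH]; first by apply/leP. have := H n; lia. Qed.

Lemma sincr_comp t s : sincr t -> sincr s -> sincr (fun n => t (s n)).
Proof.
move=> Ht Hs n.
have mono : forall a b, (a < b)%coq_nat -> (t a < t b)%coq_nat.
  move=> a b ab; elim: b ab => [|b IH] ab; first lia.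
  have := Ht b; case: (Nat.eq_dec a b) => [->|ne]; first lia.
  have := IH ltac:(lia); lia.
by apply mono, Hs.
Qed.

Lemma Un_cv_sub u l t : sincr t -> Un_cv u l -> Un_cv (fun n => u (t n)) l.
Proof.
move=> Ht Hu e ep; have [K HK] := Hu e ep; exists K => n hn.
apply HK; have := sincr_ge Ht n; lia.
Qed.

Lemma inv_small e : 0 < e -> exists K, forall n, (K <= n)%coq_nat -> / (INR n + 1) < e.
Proof.
move=> ep; have [K [hK K0]] := archimed_cor1 e ep.
exists K => n hn.
apply: Rle_lt_trans _ hK.
apply Rinv_le_contravar; first by apply lt_0_INR.
have := le_INR _ _ hn; lra.
Qed.

Lemma bw1 (u : nat -> R) B : (forall n, Rabs (u n) <= B) ->
  exists t l, sincr t /\ Un_cv (fun n => u (t n)) l.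
Proof.
move=> Hb.
have [l Hl] := @Bolzano_Weierstrass u _ (compact_P3 (-B) B) (fun n => proj1 (Rabs_le_between (u n) B) (Hb n)).
have pk : forall (K : nat) (n : nat), exists p, (K <= p)%coq_nat /\ Rabs (u p - l) < / (INR n + 1).
  move=> K n.
  have ip : 0 < / (INR n + 1) by apply Rinv_0_lt_compat; have := pos_INR n; lra.
  have nb : neighbourhood (fun y => Rabs (y - l) < / (INR n + 1)) l.
    by exists (mkposreal _ ip) => y.
  have [p [hp1 hp2]] := Hl _ K nb.
  by exists p.
pose f K n := proj1_sig (constructive_indefinite_description _ (pk K n)).
have fP : forall K n, (K <= f K n)%coq_nat /\ Rabs (u (f K n) - l) < / (INR n + 1).
  by move=> K n; rewrite /f; case: constructive_indefinite_description.
pose fix t n := match n with 0 => f 0%nat 0%nat | S m => f (S (t m)) (S m) end.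
exists t, l; split.
  by move=> n /=; have [h1 _] := fP (S (t n)) (S n); lia.
move=> e ep; have [K HK] := inv_small ep.
exists K => n hn; rewrite /R_dist.
have : Rabs (u (t n) - l) < / (INR n + 1) by case: n {hn} => [|n] /=; apply fP.
have := HK n hn; lra.
Qed.

Lemma vsum_const N c : vsum (fun _ : 'I_N => c) = INR N * c.
Proof.
rewrite /vsum big_const_ord; elim: N => [|n IH]; first by rewrite /=; ring.
change (iter n.+1 (Rplus c) 0) with (c + iter n (Rplus c) 0).
rewrite IH S_INR; ring.
Qed.

Section BW.
Variable N : nat.

Lemma bwN (y : nat -> vec N) B : (forall n, vnorm (y n) <= B) ->
  exists t (l : vec N), sincr t /\ vconv (fun n => y (t n)) l.
Proof.
move=> Hb.
have step : forall m, exists t (l : vec N), sincr t /\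
   forall i : 'I_N, (i < m)%nat -> Un_cv (fun n => y (t n) i) (l i).
  elim=> [|m [t [l [ht hl]]]].
    by exists id, (@vzero N); split => // n /=; lia.
  case: (ltnP m N) => [mN|Nm]; last first.
    exists t, l; split=> // i hi; apply hl.
    by apply: leq_trans (ltn_ord i) Nm.
  set i0 : 'I_N := Ordinal mN.
  have [s [l0 [hs hl0]]] := bw1 (u := fun n => y (t n) i0) (B := B)
     (fun n => Rle_trans _ _ _ (coord_le _ _) (Hb _)).
  exists (fun n => t (s n)), (fun i => if i == i0 then l0 else l i); split.
    exact: sincr_comp.
  move=> i hi; case: eqP => [->|ne] //.
  apply: (Un_cv_sub (u := fun n => y (t n) i)) => //; apply hl.
  rewrite ltnS leq_eqVlt in hi; case/orP: hi => // /eqP e.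
  by exfalso; apply: ne; apply: val_inj.
have [t [l [ht hl]]] := step N.
exists t, l; split => // e ep.
have ep' : 0 < e / (INR N + 1) by apply Rdiv_lt_0_compat; have := pos_INR N; lra.
have hK : forall i : 'I_N, exists K, forall n, (n >= K)%coq_nat -> R_dist (y (t n) i) (l i) < e / (INR N + 1).
  by move=> i; apply: (hl i (ltn_ord i)).
pose Kf i := proj1_sig (constructive_indefinite_description _ (hK i)).
have KfP : forall i n, (n >= Kf i)%coq_nat -> R_dist (y (t n) i) (l i) < e / (INR N + 1).
  by move=> i; rewrite /Kf; case: constructive_indefinite_description.
exists (\max_(i < N) Kf i) => n hn.
apply: Rle_lt_trans (vnorm_le_sum _) _.
apply: (Rle_lt_trans _ (vsum (fun _ : 'I_N => e / (INR N + 1)))).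
  apply vsum_le => i; apply Rlt_le; apply KfP.
  apply/leP; apply: leq_trans hn; exact: leq_bigmax.
rewrite vsum_const.
have -> : INR N * (e / (INR N + 1)) = e * (INR N / (INR N + 1)) by field; have := pos_INR N; lra.
have : INR N / (INR N + 1) < 1.
  have np := pos_INR N.
  apply (Rmult_lt_reg_r (INR N + 1)); first lra.
  rewrite /Rdiv Rmult_assoc Rinv_l; lra.
nra.
Qed.

End BW.


Fixpoint psum (f : nat -> R) (n : nat) : R :=
  match n with 0 => 0 | S m => psum f m + f m end.

Lemma psum_sum f n : sum_f_R0 f n = psum f (S n).
Proof. elim: n => [|n IH] /=; first ring. rewrite IH /=; ring. Qed.

Lemma psum_S f n : psum f (S n) = psum f n + f n.
Proof. by []. Qed.

Lemma psum_mono f m n : (forall j, 0 <= f j) -> (m <= n)%coq_nat -> psum f m <= psum f n.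
Proof.
move=> fp; elim: n => [|n IH] hmn.
  have -> : m = 0%nat by lia. lra.
case: (Nat.eq_dec m (S n)) => [->|ne]; first lra.
have := IH ltac:(lia); have := fp n; rewrite /=; lra.
Qed.

Lemma psum_ge0 f n : (forall j, 0 <= f j) -> 0 <= psum f n.
Proof. move=> fp; have := psum_mono fp (le_0_n n); rewrite /=; lra. Qed.

Lemma psum_shift f n : psum f (S n) = f 0%nat + psum (fun j => f (S j)) n.
Proof. elim: n => [|n IH] /=; first ring. move: IH => /= ->; ring. Qed.

Lemma psum_scal a f n : psum (fun j => a * f j) n = a * psum f n.
Proof. elim: n => [|n IH] /=; first ring. rewrite IH; ring. Qed.

Lemma psum_le f g n : (forall j, f j <= g j) -> psum f n <= psum g n.
Proof. move=> H; elim: n => [|n IH] /=; first lra. have := H n; lra. Qed.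

Lemma psum_tail a b K n : (forall j, 0 <= a j) -> (forall j, 0 <= b j) ->
  (forall j, (K <= j)%coq_nat -> a j <= b j) -> psum a n <= psum a K + psum b n.
Proof.
move=> ap bp H; elim: n => [|n IH].
  have := psum_ge0 K ap; rewrite /=; lra.
case: (Compare_dec.le_lt_dec K n) => hK.
  have := H n hK; rewrite /=; lra.
have := psum_mono ap (m := S n) (n := K) ltac:(lia).
have := psum_ge0 (S n) bp; lra.
Qed.

Lemma psum_diff f m n : (m <= n)%coq_nat -> psum f n - psum f m = psum (fun j => f (m + j)%nat) (n - m).
Proof.
move=> hmn; elim: n hmn => [|n IH] hmn.
  have -> : m = 0%nat by lia. rewrite /=; ring.
case: (Nat.eq_dec m (S n)) => [->|ne].
  rewrite subnn /=; ring.
have hm : (m <= n)%coq_nat by lia.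
rewrite subSn; last by apply/leP.
rewrite /= -IH // subnKC; [ring | by apply/leP].
Qed.

Lemma amgm D Dj X : 0 <= D -> 0 <= Dj -> 0 <= X -> D * D <= X * Dj -> 2 * D <= Dj + X.
Proof. move=> h1 h2 h3 h4; have := Rle_0_sqr (X - Dj); rewrite /Rsqr => h5. apply Rnot_lt_le => h; nra. Qed.

Lemma concave_tangent (phi : R -> R) (eta : ereal) s t l :
  (forall a b th, 0 <= a -> Rlt_e a eta -> 0 <= b -> Rlt_e b eta -> 0 <= th <= 1 ->
       th * phi a + (1 - th) * phi b <= phi (th * a + (1 - th) * b)) ->
  derivable_pt_lim phi t l ->
  0 <= s -> Rlt_e s eta -> 0 <= t -> Rlt_e t eta -> s < t ->
  phi s - phi t <= l * (s - t).
Proof.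
move=> conc der s0 se t0 te st.
apply Rnot_lt_le => hlt.
set g := phi s - phi t - l * (s - t).
have gp : 0 < g by rewrite /g; lra.
set e := g / (2 * (t - s)).
have ep : 0 < e by apply Rdiv_lt_0_compat; lra.
have [del Hd] := der e ep.
set th := Rmin 1 (del / (2 * (t - s))).
have thp : 0 < th.
  apply Rmin_pos; first lra.
  apply Rdiv_lt_0_compat; [apply cond_pos|lra].
have th1 : th <= 1 by apply Rmin_l.
have th2 : th <= del / (2 * (t - s)) by apply Rmin_r.
set hh := th * (s - t).
have hn0 : hh <> 0 by rewrite /hh; nra.
have hsmall : Rabs hh < del.
  rewrite /hh Rabs_mult (Rabs_left (s - t)); last lra.
  rewrite (Rabs_right th); last lra.
  have : th * (t - s) <= del / 2.
    have := Rmult_le_compat_r (t - s) _ _ ltac:(lra) th2.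
    have -> : del / (2 * (t - s)) * (t - s) = del / 2 by field; lra.
    done.
  have := cond_pos del; lra.
have := Hd hh hn0 hsmall.
have ec : t + hh = th * s + (1 - th) * t by rewrite /hh; ring.
rewrite ec.
have hc := conc s t th s0 se t0 te ltac:(lra).
move/Rabs_lt_between => [hd1 _].
(* (phi(t+hh) - phi t)/hh - l > -e, with hh < 0 : phi(t+hh)-phi t < (l - e) * hh ... *)
have hneg : hh < 0 by rewrite /hh; nra.
have : phi (th * s + (1 - th) * t) - phi t <= (l - e) * hh.
  have hq : (phi (th * s + (1 - th) * t) - phi t) / hh * hh = phi (th * s + (1 - th) * t) - phi t by field.
  rewrite -hq.
  move: hd1; generalize ((phi (th * s + (1 - th) * t) - phi t) / hh) => q hd1.
  nra.
move=> h1.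
(* th * (phi s - phi t) <= phi(..) - phi t <= (l - e) th (s - t) *)
have h2 : th * (phi s - phi t) <= (l - e) * (th * (s - t)) by rewrite /hh in h1; lra.
have h3 : phi s - phi t <= (l - e) * (s - t).
  apply (Rmult_le_reg_l th) => //; lra.
have : (l - e) * (s - t) = l * (s - t) + g / 2 by rewrite /e; field; lra.
rewrite /g in gp *; lra.
Qed.

Section Seq.
Variable N : nat.

Lemma path_bound (xx : nat -> vec N) (Dl : nat -> R) :
  (forall k, vnorm (vsub (xx (S k)) (xx k)) <= Dl k) ->
  forall k m, (k <= m)%coq_nat -> vnorm (vsub (xx m) (xx k)) <= psum Dl m - psum Dl k.
Proof.
move=> HD k; elim=> [|m IH] hkm.
  have -> : k = 0%nat by lia.
  have -> : vsub (xx 0%nat) (xx 0%nat) = (fun _ => 0 * 0).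
    by apply: functional_extensionality => i; rewrite /vsub; ring.
  rewrite vnorm_scale Rabs_R0 /=; lra.
case: (Nat.eq_dec k (S m)) => [->|ne].
  have -> : vsub (xx (S m)) (xx (S m)) = (fun _ => 0 * 0).
    by apply: functional_extensionality => i; rewrite /vsub; ring.
  rewrite vnorm_scale Rabs_R0; lra.
have := IH ltac:(lia).
have := @vnorm_tri _ (xx (S m)) (xx m) (xx k).
have := HD m.
rewrite /=; lra.
Qed.

Lemma ball_induction (xx : nat -> vec N) (Dl Phi : nat -> R) xs delta beta K :
  (forall k, vnorm (vsub (xx (S k)) (xx k)) <= Dl k) ->
  (forall k, 0 <= Dl k) -> 0 <= beta ->
  (forall k, (K <= k)%coq_nat -> 0 <= Phi k) ->
  (forall k, (K <= k)%coq_nat -> vnorm (vsub (xx (S k)) xs) < delta ->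
       2 * Dl (S k) <= Dl k + beta * (Phi (S k) - Phi (S (S k)))) ->
  vnorm (vsub (xx (S K)) xs) + Dl K + beta * Phi (S K) < delta ->
  forall m, psum Dl m <= psum Dl (S K) + Dl K + beta * Phi (S K).
Proof.
move=> HD Dp bp Pp Hstep Hst.
have Q : forall n, vnorm (vsub (xx (S K + n)%coq_nat) xs) < delta /\
   psum Dl (S K + n + 1)%coq_nat - psum Dl (S K) + Dl (S K + n)%coq_nat <= Dl K + beta * (Phi (S K) - Phi (S K + n + 1)%coq_nat).
  elim=> [|n [IHb IHs]].
    have := Dp K; have := Pp (S K) ltac:(lia).
    have -> : (S K + 0)%coq_nat = S K by lia.
    have -> : (S K + 0 + 1)%coq_nat = S (S K) by lia.
    move=> h1 h2; split; first nra.
    have := Hstep K (le_n K) ltac:(nra).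
    rewrite /=; lra.
  have e1 : (S K + S n)%coq_nat = S (S K + n)%coq_nat by lia.
  have e2 : (S K + S n + 1)%coq_nat = S (S K + n + 1)%coq_nat by lia.
  have e3 : (S K + n + 1)%coq_nat = S (S K + n)%coq_nat by lia.
  rewrite e3 in IHs.
  have hb : vnorm (vsub (xx (S K + S n)%coq_nat) xs) < delta.
    have := @vnorm_tri _ (xx (S K + S n)%coq_nat) (xx (S K)) xs.
    have := path_bound HD (k := S K) (m := (S K + S n)%coq_nat) ltac:(lia).
    rewrite e1.
    have := Dp K; have := Dp (S K + n)%coq_nat; have := Pp (S (S K + n)%coq_nat) ltac:(lia).
    have := Pp (S K) ltac:(lia).
    nra.
  split => //.
  rewrite e1 in hb *; rewrite e2 e3.
  have := Hstep (S K + n)%coq_nat ltac:(lia) hb.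
  rewrite (psum_S _ (S _)); lra.
move=> m.
case: (Compare_dec.le_lt_dec m (S K)) => hm.
  have := psum_mono Dp hm; have := Dp K; have := Pp (S K) ltac:(lia); nra.
have [n0 hn0] : exists n0, m = (S K + n0)%coq_nat by exists (m - S K)%coq_nat; lia.
have [_ hq] := Q n0.
have e : (S K + n0 + 1)%coq_nat = S (S K + n0)%coq_nat by lia.
rewrite e in hq.
have := psum_mono Dp (m := m) (n := S (S K + n0)%coq_nat) ltac:(lia).
have := Dp (S K + n0)%coq_nat.
have := Pp (S (S K + n0)%coq_nat) ltac:(lia).
nra.
Qed.

End Seq.


Lemma mulmv_scal N (A : mat N) a u i : mulmv A (fun k => a * u k) i = a * mulmv A u i.
Proof. rewrite /mulmv -vsum_scal; apply vsum_ext => j; ring. Qed.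

Lemma mulmv_addv N (A : mat N) u w i : mulmv A (fun k => u k + w k) i = mulmv A u i + mulmv A w i.
Proof. rewrite /mulmv -vsum_add; apply vsum_ext => j; ring. Qed.

Lemma quad_exp N (A : mat N) u m : (forall i j, A i j = A j i) ->
  dot (mulmv A (fun i => u i + m i)) (fun i => u i + m i) =
  dot (mulmv A u) u + 2 * dot (mulmv A m) u + dot (mulmv A m) m.
Proof.
move=> S.
have e1 : mulmv A (fun i => u i + m i) = (fun i => mulmv A u i + mulmv A m i).
  by apply: functional_extensionality => i; apply mulmv_addv.
rewrite e1.
have e2 : dot (mulmv A u) m = dot (mulmv A m) u by rewrite dot_mulmv_sym // dot_sym.
have e3 : 2 * dot (mulmv A m) u = dot (mulmv A u) m + dot (mulmv A m) u by rewrite e2; ring.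
rewrite e3 /dot -!vsum_add; apply vsum_ext => i; ring.
Qed.

Section Algo.
Variable N : nat.
Variables (C : vec N -> Prop) (h : vec N -> R) (gradh : vec N -> vec N)
  (L eps lambar : R) (lam : nat -> R) (x : nat -> vec N) (H P : nat -> mat N) (d : nat -> vec N).
Hypothesis hg : forall z, has_gradient h z (gradh z).
Hypothesis Lp : 0 < L.
Hypothesis lip : lipschitz gradh L.
Hypothesis epsp : 0 < eps.
Hypothesis hH : forall k, clarke_hessian gradh (x k) (H k).
Hypothesis hP : forall k, is_proj_psd (H k) (P k).
Hypothesis hd : forall k i, mulmv (madd (P k) (mscale eps (@idm N))) (d k) i = gradh (x k) i.
Hypothesis hproj : forall k, in_proj_A C (madd (P k) (mscale eps (@idm N)))
                 (vsub (x k) (vscale (lam k) (d k))) (x (S k)).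
Hypothesis hlam : forall k, 0 < lam k <= lambar.
Hypothesis hlamb : lambar < eps / L.

Ltac neq0 := repeat split; apply: Rgt_not_eq; lra.

Definition Am k := madd (P k) (mscale eps (@idm N)).

Lemma Asym k : forall i j, Am k i j = Am k j i.
Proof.
move=> i j; have [[S _] _] := hP k.
rewrite /Am /madd /mscale /idm S eq_sym //.
Qed.

Lemma Alow k w : eps * dot w w <= dot (mulmv (Am k) w) w.
Proof.
have [[_ Hp] _] := hP k.
have := Hp w.
rewrite (dot_sym (mulmv (Am k) w)) /dot.
rewrite (vsum_ext (F := fun i => w i * mulmv (Am k) w i) (G := fun i => w i * mulmv (P k) w i + eps * (w i * w i))).
  rewrite vsum_add vsum_scal; lra.
move=> i; rewrite /Am mulmv_A; ring.
Qed.

Definition cA := 2 * sqrt (vsum (fun i : 'I_N => vsum (fun j : 'I_N => L * L))) + eps.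

Lemma cA_pos : 0 < cA.
Proof. rewrite /cA; have := sqrt_pos (vsum (fun i : 'I_N => vsum (fun j : 'I_N => L * L))); lra. Qed.

Lemma Aup k w : vnorm (mulmv (Am k) w) <= cA * vnorm w.
Proof.
have e : mulmv (Am k) w = (fun i => mulmv (P k) w i + eps * w i).
  by apply: functional_extensionality => i; rewrite /Am mulmv_A.
rewrite e.
apply: Rle_trans (vnorm_add _ _) _.
rewrite vnorm_scale Rabs_right; last lra.
have h1 := mulmv_norm (P k) w.
have hb := frob_bound (clarke_entry lip (hH k)).
have hp := proj_bound (hP k).
have fp := frob_ge0 (P k); have fh := frob_ge0 (H k).
have : frob (P k) <= 2 * frob (H k) by nra.
have := vnorm_ge0 w.
rewrite /cA; nra.
Qed.

Definition Dl k := vnorm (vsub (x (S k)) (x k)).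

Lemma Dl_ge0 k : 0 <= Dl k.
Proof. apply vnorm_ge0. Qed.

Definition acoef := (eps - L * lambar) / 2.

Lemma acoef_pos : 0 < acoef.
Proof.
rewrite /acoef.
have : L * lambar < eps.
  have := Rmult_lt_compat_l L _ _ Lp hlamb.
  have -> : L * (eps / L) = eps by field; lra.
  done.
lra.
Qed.

Lemma decrease k : C (x k) ->
  acoef / lam k * (Dl k * Dl k) <= h (x k) - h (x (S k)).
Proof.
move=> Ck.
have [_ Hpr] := hproj k.
have := Hpr (x k) Ck.
set u := vsub (x (S k)) (x k).
set m : vec N := fun i => lam k * d k i.
have e1 : vsub (x (S k)) (vsub (x k) (vscale (lam k) (d k))) = (fun i => u i + m i).
  by apply: functional_extensionality => i; rewrite /u /m /vsub /vscale; ring.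
have e2 : vsub (x k) (vsub (x k) (vscale (lam k) (d k))) = m.
  by apply: functional_extensionality => i; rewrite /m /vsub /vscale; ring.
rewrite e1 e2 quad_exp; last exact: Asym.
have e3 : mulmv (Am k) m = (fun i => lam k * gradh (x k) i).
  by apply: functional_extensionality => i; rewrite /m mulmv_scal hd.
rewrite -/(Am k) e3.
have e4 : dot (fun i => lam k * gradh (x k) i) u = lam k * dot (gradh (x k)) u.
  by rewrite /dot -vsum_scal; apply vsum_ext => i; ring.
rewrite e4 => hq.
have hl := Alow k u.
have hdesc := descent hg lip (x k) (x (S k)).
rewrite -/u in hdesc.
move/Rabs_le_between: hdesc => [_ hdesc].
have hnu : dot u u = Dl k * Dl k by rewrite -vnorm_sq.
rewrite -/u in hnu.
have [l0 l1] := hlam k.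
have hdot : lam k * dot (gradh (x k)) u <= - (eps / 2) * dot u u by lra.
(* h(x+) <= h x + G + L/2 D^2 ; lam G <= -eps/2 D^2 *)
have : lam k * (h (x k) - h (x (S k))) >= acoef * (Dl k * Dl k).
  rewrite /acoef.
  have hD := dot_ge0 u.
  have eD : Dl k = vnorm u by [].
  rewrite eD (vnorm_sq u).
  rewrite (vnorm_sq u) in hdesc.
  have p1 := Rmult_le_compat_l (lam k) _ _ (Rlt_le _ _ l0) hdesc.
  have p2 : lam k * (L * dot u u) <= lambar * (L * dot u u).
    apply Rmult_le_compat_r => //; nra.
  nra.
move=> hh.
apply (Rmult_le_reg_l (lam k)) => //.
have -> : lam k * (acoef / lam k * (Dl k * Dl k)) = acoef * (Dl k * Dl k) by field; lra.
lra.
Qed.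

Definition vv k : vec N := fun i => gradh (x (S k)) i - gradh (x k) i
   - (1 / lam k) * mulmv (Am k) (vsub (x (S k)) (x k)) i.

Lemma vv_bound k : vnorm (vv k) <= (L + cA / lam k) * Dl k.
Proof.
have e : vv k = (fun i => vsub (gradh (x (S k))) (gradh (x k)) i + (- (1 / lam k)) * mulmv (Am k) (vsub (x (S k)) (x k)) i).
  by apply: functional_extensionality => i; rewrite /vv /vsub; ring.
rewrite e; apply: Rle_trans (vnorm_add _ _) _.
rewrite vnorm_scale Rabs_Ropp.
have [l0 _] := hlam k.
rewrite Rabs_right; last by apply Rle_ge; apply Rlt_le; apply Rdiv_lt_0_compat; lra.
have h1 := lip (x (S k)) (x k).
have h2 := Aup k (vsub (x (S k)) (x k)).
rewrite -/(Dl k) in h1 h2.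
have : 1 / lam k * vnorm (mulmv (Am k) (vsub (x (S k)) (x k))) <= 1 / lam k * (cA * Dl k).
  apply Rmult_le_compat_l => //; apply Rlt_le; apply Rdiv_lt_0_compat; lra.
have -> : 1 / lam k * (cA * Dl k) = cA / lam k * Dl k by field; lra.
lra.
Qed.

Lemma inC k : C (x (S k)).
Proof. by have [] := hproj k. Qed.

Lemma f_inC y : C y -> h_plus_ind h C y = EFin (h y).
Proof. by move=> Cy; rewrite /h_plus_ind; case: excluded_middle_informative. Qed.

Lemma vv_frechet k : frechet_subdiff (h_plus_ind h C) (x (S k)) (vv k).
Proof.
exists (h (x (S k))); split; first by apply f_inC, inC.
move=> e ep.
have [l0 _] := hlam k.
have e2p : 0 < e / 2 by lra.
have [d1 [d1p Hd]] := hg (x (S k)) e2p.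
have cp := cA_pos.
have d2p : 0 < e * lam k / cA by apply Rdiv_lt_0_compat => //; nra.
exists (Rmin d1 (e * lam k / cA)); split; first by apply Rmin_pos.
move=> y hy.
have hy1 : vnorm (vsub y (x (S k))) < d1 by have := Rmin_l d1 (e * lam k / cA); lra.
have hy2 : vnorm (vsub y (x (S k))) < e * lam k / cA by have := Rmin_r d1 (e * lam k / cA); lra.
rewrite /h_plus_ind; case: excluded_middle_informative => // Cy.
have [_ Hpr] := hproj k.
have := Hpr y Cy.
set z := vsub (x k) (vscale (lam k) (d k)).
set u := vsub y (x (S k)) in hy1 hy2 *.
set m' := vsub (x (S k)) z.
have e1 : vsub y z = (fun i => u i + m' i).
  by apply: functional_extensionality => i; rewrite /u /m' /vsub; ring.
rewrite e1 quad_exp; last exact: Asym.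
rewrite -/(Am k) => hq.
have hQ : dot (mulmv (Am k) u) u <= cA * (vnorm u * vnorm u).
  apply: Rle_trans (dot_le_norm _ _) _.
  have := Aup k u; have := vnorm_ge0 u; nra.
have ev : vv k = (fun i => gradh (x (S k)) i + (- (1 / lam k)) * mulmv (Am k) m' i).
  apply: functional_extensionality => i.
  have em : m' = (fun j => vsub (x (S k)) (x k) j + lam k * d k j).
    by apply: functional_extensionality => j; rewrite /m' /z /vsub /vscale; ring.
  rewrite em mulmv_addv mulmv_scal /Am hd /vv /Am; field; lra.
have edot : dot (vv k) u = dot (gradh (x (S k))) u - (1 / lam k) * dot (mulmv (Am k) m') u.
  rewrite ev /dot; rewrite -vsum_scal -vsum_sub; apply vsum_ext => i; ring.
rewrite edot.
have := Hd y hy1; rewrite -/u; move/Rabs_le_between => [hg1 _].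
have nu := vnorm_ge0 u.
have key : - (1 / lam k) * dot (mulmv (Am k) m') u <= e / 2 * vnorm u.
  have : - (1 / lam k) * dot (mulmv (Am k) m') u <= (1 / lam k) * (cA * (vnorm u * vnorm u)) / 2.
    have : - dot (mulmv (Am k) m') u <= (cA * (vnorm u * vnorm u)) / 2 by lra.
    move=> hh; have il : 0 < 1 / lam k by apply Rdiv_lt_0_compat; lra.
    have := Rmult_le_compat_l (1 / lam k) _ _ (Rlt_le _ _ il) hh. lra.
  have : (1 / lam k) * (cA * (vnorm u * vnorm u)) / 2 <= e / 2 * vnorm u.
    have hh : cA * vnorm u <= e * lam k.
      have := Rmult_lt_compat_l cA _ _ cp hy2.
      have -> : cA * (e * lam k / cA) = e * lam k by field; lra.
      lra.
    have -> : (1 / lam k) * (cA * (vnorm u * vnorm u)) / 2 = (cA * vnorm u) * vnorm u / (2 * lam k) by field; lra.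
    apply (Rmult_le_reg_l (2 * lam k)); first lra.
    have -> : 2 * lam k * (cA * vnorm u * vnorm u / (2 * lam k)) = (cA * vnorm u) * vnorm u by field; lra.
    nra.
  lra.
simpl. lra.
Qed.

Hypothesis hC : closed_vset C.
Hypothesis hB : exists B, forall k, vnorm (x k) <= B.
Hypothesis hnsum : ~ (exists l, infinite_sum lam l).
Hypothesis hM : exists M, forall k, lam (S k) / lam k <= M.
Hypothesis hKL : KL (h_plus_ind h C).

Lemma h_lower : exists lb, forall k, lb <= h (x k).
Proof.
have [B HB] := hB.
set g0 := gradh (@vzero N).
exists (h (@vzero N) - vnorm g0 * B - L / 2 * (B * B)) => k.
have := descent hg lip (@vzero N) (x k).
have -> : vsub (x k) (@vzero N) = x k by apply: functional_extensionality => i; rewrite /vsub /vzero; ring.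
move/Rabs_le_between => [h1 _].
have := CS g0 (x k); move/Rabs_le_between => [hc _].
have := HB k; have := vnorm_ge0 (x k); have := vnorm_ge0 g0.
rewrite -/g0 in h1.
have : L / 2 * (vnorm (x k) * vnorm (x k)) <= L / 2 * (B * B).
  apply Rmult_le_compat_l; first lra.
  have := HB k; have := vnorm_ge0 (x k); nra.
have := Rmult_le_compat_l (vnorm g0) _ _ (vnorm_ge0 g0) (HB k). lra.
Qed.

Lemma h_dec k : h (x (S (S k))) <= h (x (S k)).
Proof.
have := decrease (inC k) (k := S k).
have [l0 _] := hlam (S k).
have : 0 <= acoef / lam (S k) * (Dl (S k) * Dl (S k)).
  apply Rmult_le_pos; last nra.
  apply Rlt_le, Rdiv_lt_0_compat => //; apply acoef_pos.
lra.
Qed.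

Lemma h_mono m n : (m <= n)%coq_nat -> h (x (S n)) <= h (x (S m)).
Proof.
elim: n => [|n IH] hmn.
  have -> : m = 0%nat by lia. lra.
case: (Nat.eq_dec m (S n)) => [->|ne]; first lra.
have := IH ltac:(lia); have := h_dec n; lra.
Qed.

Lemma sum_bound lb : (forall k, lb <= h (x k)) ->
  forall n, psum (fun j => acoef / lam (S j) * (Dl (S j) * Dl (S j))) n <= h (x 1%nat) - lb.
Proof.
move=> Hlb n.
suff : psum (fun j => acoef / lam (S j) * (Dl (S j) * Dl (S j))) n <= h (x 1%nat) - h (x (S n)).
  have := Hlb (S n); lra.
elim: n => [|n IH] /=; first lra.
have := decrease (inC n) (k := S n); lra.
Qed.

Lemma liminf e K : 0 < e -> exists k, (K <= k)%coq_nat /\ Dl (S k) < e * lam (S k).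
Proof.
move=> ep.
apply NNPP => hne.
have hall : forall k, (K <= k)%coq_nat -> e * lam (S k) <= Dl (S k).
  move=> k hk; apply Rnot_lt_le => hlt; apply hne; by exists k.
apply hnsum.
have [lb Hlb] := h_lower.
have ap := acoef_pos.
have eel : forall j, 0 < e * e * lam j.
  by move=> j; have [l0 _] := hlam j; apply Rmult_lt_0_compat; [apply Rmult_lt_0_compat|]; lra.
set b := fun j => Dl j * Dl j / (e * e * lam j).
have bp : forall j, 0 <= b j.
  move=> j; rewrite /b; have [l0 _] := hlam j.
  apply Rmult_le_pos; first nra.
  by apply Rlt_le, Rinv_0_lt_compat.
have lp : forall j, 0 <= lam j by move=> j; have [l0 _] := hlam j; lra.
have hab : forall j, (S K <= j)%coq_nat -> lam j <= b j.
  move=> j hj.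
  have [k ek] : exists k, j = S k by exists (Nat.pred j); lia.
  subst j.
  have := hall k ltac:(lia).
  have [l0 _] := hlam (S k).
  have := Dl_ge0 (S k).
  rewrite /b => h1 h2.
  have := eel (S k) => hq.
  apply (Rmult_le_reg_r (e * e * lam (S k))) => //.
  have -> : Dl (S k) * Dl (S k) / (e * e * lam (S k)) * (e * e * lam (S k)) = Dl (S k) * Dl (S k) by field; lra.
  have : 0 <= e * lam (S k) by nra.
  nra.
set Cst := psum lam (S K) + b 0%nat + (h (x 1%nat) - lb) / (e * e * acoef).
have bound : forall n, sum_f_R0 lam n <= Cst.
  move=> n; rewrite psum_sum.
  have t1 := psum_tail (S n) lp bp hab.
  have t2 := psum_mono bp (m := S n) (n := S (S n)) ltac:(lia).
  have t3 := psum_shift b (S n).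
  have t4 : psum (fun j => b (S j)) (S n) = / (e * e * acoef) * psum (fun j => acoef / lam (S j) * (Dl (S j) * Dl (S j))) (S n).
    rewrite -psum_scal; apply: f_equal2 => //.
    apply: functional_extensionality => j; rewrite /b; have [l0 _] := hlam (S j); field; neq0.
  have t5 := sum_bound Hlb (S n).
  have ip : 0 < / (e * e * acoef) by apply Rinv_0_lt_compat; apply Rmult_lt_0_compat; [apply Rmult_lt_0_compat|]; lra.
  have t6 : / (e * e * acoef) * psum (fun j => acoef / lam (S j) * (Dl (S j) * Dl (S j))) (S n) <= (h (x 1%nat) - lb) / (e * e * acoef).
    rewrite /Rdiv Rmult_comm; apply Rmult_le_compat_r; lra.
  rewrite /Cst; lra.
have gr : Un_growing (fun n => sum_f_R0 lam n).
  by move=> n /=; have := lp (S n); lra.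
have ub : has_ub (fun n => sum_f_R0 lam n).
  exists Cst => y [i ->]; apply bound.
have [l Hl] := growing_cv _ gr ub.
by exists l.
Qed.

Lemma frechet_limiting (f : efun N) z v : frechet_subdiff f z v -> limiting_subdiff f z v.
Proof.
move=> Hf; have [fx [hfx _]] := Hf.
exists fx; split => //.
exists (fun _ => z), (fun _ => fx), (fun _ => v).
have z0 : forall w : vec N, vnorm (vsub w w) = 0.
  move=> w; have -> : vsub w w = (fun _ => 0 * 0) by apply: functional_extensionality => i; rewrite /vsub; ring.
  by rewrite vnorm_scale Rabs_R0 Rmult_0_l.
split; first by move=> e ep; exists 0%nat => k _; rewrite z0.
split => //; split.
  by move=> e ep; exists 0%nat => n _; rewrite /R_dist Rminus_diag_eq // Rabs_R0.
split => //.
by move=> e ep; exists 0%nat => k _; rewrite z0.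
Qed.

Lemma cluster : exists xs, C xs /\ critical (h_plus_ind h C) xs /\
  (forall e K, 0 < e -> exists j, (K <= j)%coq_nat /\ vnorm (vsub (x (S (S j))) xs) < e /\ Dl (S j) < e).
Proof.
have hs : forall j, exists k, (j <= k)%coq_nat /\ Dl (S k) < / (INR j + 1) * lam (S k).
  move=> j; apply liminf; apply Rinv_0_lt_compat; have := pos_INR j; lra.
pose sg j := proj1_sig (constructive_indefinite_description _ (hs j)).
have sgP : forall j, (j <= sg j)%coq_nat /\ Dl (S (sg j)) < / (INR j + 1) * lam (S (sg j)).
  by move=> j; rewrite /sg; case: constructive_indefinite_description.
have [B HB] := hB.
pose y n := x (S (S (sg n))).
have [t [xs [ht hconv]]] := bwN (y := y) (B := B) (fun n => HB _).
have tge := sincr_ge ht.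
have Cxs : C xs by apply: (hC (x := fun n => y (t n))) => // n; apply inC.
have lbp : 0 < lambar by have := hlam 0%nat; lra.
have cp := cA_pos.
have inv_le : forall n m, (n <= m)%coq_nat -> / (INR m + 1) <= / (INR n + 1).
  move=> n m hnm; apply Rinv_le_contravar; first by have := pos_INR n; lra.
  have := le_INR _ _ hnm; lra.
have Dsmall : forall n, Dl (S (sg (t n))) <= / (INR n + 1) * lambar.
  move=> n; have [_ h2] := sgP (t n).
  have := inv_le _ _ (tge n).
  have [l0 l1] := hlam (S (sg (t n))).
  have : 0 < / (INR n + 1) by apply Rinv_0_lt_compat; have := pos_INR n; lra.
  have : 0 < / (INR (t n) + 1) by apply Rinv_0_lt_compat; have := pos_INR (t n); lra.
  nra.
pose vn n := vv (S (sg (t n))).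
have vbound : forall n, vnorm (vn n) <= (L * lambar + cA) * / (INR n + 1).
  move=> n; rewrite /vn; have := vv_bound (S (sg (t n))).
  have [_ h2] := sgP (t n).
  have := inv_le _ _ (tge n).
  have [l0 l1] := hlam (S (sg (t n))).
  set lm := lam (S (sg (t n))) in h2 l0 l1 *.
  set D := Dl (S (sg (t n))) in h2 *.
  set i1 := / (INR (t n) + 1) in h2 *.
  set i2 := / (INR n + 1).
  have i1p : 0 < i1 by apply Rinv_0_lt_compat; have := pos_INR (t n); lra.
  have Dp : 0 <= D by apply Dl_ge0.
  move=> h3 h4.
  have e1 : (L + cA / lm) * D <= (L + cA / lm) * (i1 * lm).
    apply Rmult_le_compat_l; last lra.
    have : 0 < cA / lm by apply Rdiv_lt_0_compat.
    lra.
  have e1' : (L + cA / lm) * (i1 * lm) = (L * lm + cA) * i1 by field; lra.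
  have : (L * lm + cA) * i1 <= (L * lambar + cA) * i2.
    apply Rmult_le_compat; try nra.
  lra.
exists xs; split; first exact: Cxs.
split.
  exists (h xs); split; first by apply f_inC.
  exists (fun n => y (t n)), (fun n => h (y (t n))), vn.
  split => //; split; first by move=> n; apply f_inC, inC.
  split.
    move=> e ep; have [d0 [dp Hd]] := h_cont hg xs ep.
    have [K HK] := hconv d0 dp; exists K => n hn.
    by apply Hd, HK; apply/leP.
  split; first by move=> n; apply vv_frechet.
  move=> e ep.
  have cp2 : 0 < L * lambar + cA by nra.
  have [K HK] := inv_small (Rdiv_lt_0_compat _ _ ep cp2).
  exists K => n /leP hn.
  have -> : vsub (vn n) (@vzero N) = vn n by apply: functional_extensionality => i; rewrite /vsub /vzero; ring.
  apply: Rle_lt_trans (vbound n) _.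
  have := HK n hn.
  move=> hh; have := Rmult_lt_compat_l _ _ _ cp2 hh.
  have -> : (L * lambar + cA) * (e / (L * lambar + cA)) = e by field; lra.
  done.
move=> e K ep.
have [K1 HK1] := hconv e ep.
have [K2 HK2] := inv_small (Rdiv_lt_0_compat _ _ ep lbp).
set n := (K + K1 + K2)%coq_nat.
exists (sg (t n)); split.
  have := tge n; have := (proj1 (sgP (t n))); rewrite /n; lia.
split.
  apply HK1; apply/leP; rewrite /n; lia.
have := Dsmall n.
have := HK2 n ltac:(rewrite /n; lia).
move=> hh; have := Rmult_lt_compat_r _ _ _ lbp hh.
have -> : e / lambar * lambar = e by field; lra.
lra.
Qed.

Lemma main_result :
  (exists l, infinite_sum (fun k => vnorm (vsub (x (S k)) (x k))) l) /\
  (exists xs, vconv x xs /\ critical (h_plus_ind h C) xs).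
Proof.
have [xs [Cxs [crit clus]]] := cluster.
set hs := h xs.
have hs_le : forall k, hs <= h (x (S k)).
  move=> k; apply Rnot_lt_le => hlt.
  have ep : 0 < hs - h (x (S k)) by lra.
  have [d0 [dp Hd]] := h_cont hg xs ep.
  have [j [hj [h1 _]]] := clus d0 k dp.
  have := Hd _ h1; move/Rabs_lt_between => [h2 _].
  have := h_mono (m := k) (n := S j) ltac:(lia).
  rewrite /hs in hlt h2 *; lra.
have r_to0 : forall e, 0 < e -> exists K, forall k, (K <= k)%coq_nat -> h (x (S k)) - hs < e.
  move=> e ep.
  have [d0 [dp Hd]] := h_cont hg xs ep.
  have [j [_ [h1 _]]] := clus d0 0%nat dp.
  exists (S j) => k hk.
  have := Hd _ h1; move/Rabs_lt_between => [_ h2].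
  have := h_mono (m := S j) (n := k) hk.
  rewrite /hs; lra.
have [_ [_ HKL]] := hKL.
have [eta [delta [phi [phi' [eta0 [dp [phi0 [phipos [phicont [conc [phider KLI]]]]]]]]]]] :=
  HKL xs (ex_intro _ (@vzero N) crit) hs (f_inC Cxs).
have [etar [etap Heta]] : exists etar, 0 < etar /\ forall t, t < etar -> Rlt_e t eta.
  by case: eta eta0 {conc phider KLI phipos phicont} => [r|] /= h0; [exists r | exists 1; split; [lra|]].
have [M HMM] := hM.
have Mp : 0 <= M.
  have := HMM 0%nat; have [a1 _] := hlam 1%nat; have [a0 _] := hlam 0%nat.
  have : 0 < lam 1%nat / lam 0%nat by apply Rdiv_lt_0_compat.
  lra.
have ap := acoef_pos.
have cp := cA_pos.
set b := L * lambar + cA * M.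
set beta := b / acoef.
have bp : 0 <= b.
  rewrite /b; have : 0 <= lambar by have := hlam 0%nat; lra.
  move=> h1; have := Rmult_le_pos _ _ (Rlt_le _ _ Lp) h1; have := Rmult_le_pos _ _ (Rlt_le _ _ cp) Mp; lra.
have betap : 0 <= beta by rewrite /beta; apply Rmult_le_pos => //; apply Rlt_le, Rinv_0_lt_compat.
have hbk : forall k, lam (S k) * (L + cA / lam k) <= b.
  move=> k; have [a1 a2] := hlam (S k); have [a0 _] := hlam k.
  have -> : lam (S k) * (L + cA / lam k) = L * lam (S k) + cA * (lam (S k) / lam k) by field; lra.
  have := HMM k.
  have := Rmult_le_compat_l L _ _ (Rlt_le _ _ Lp) a2.
  move=> h1 h2; have := Rmult_le_compat_l cA _ _ (Rlt_le _ _ cp) h2.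
  rewrite /b; lra.
have [K0 HK0] := r_to0 etar etap.
set Phi := fun k => phi (h (x k) - hs).
have step : forall k, (K0 <= k)%coq_nat -> vnorm (vsub (x (S k)) xs) < delta ->
    2 * Dl (S k) <= Dl k + beta * (Phi (S k) - Phi (S (S k))).
  move=> k hk hball.
  rewrite /Phi.
  have r0 := hs_le k; have r10 := hs_le (S k).
  have re := HK0 k hk; have r1e := HK0 (S k) ltac:(lia).
  have hdec := decrease (inC k) (k := S k).
  set rk := h (x (S k)) - hs in re hdec *.
  set rk1 := h (x (S (S k))) - hs in r1e hdec *.
  have [l0 _] := hlam (S k).
  have qp : 0 < acoef / lam (S k) by apply Rdiv_lt_0_compat.
  set q := acoef / lam (S k) in hdec qp.
  have Dp := Dl_ge0 (S k); have Djp := Dl_ge0 k.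
  set D := Dl (S k) in hdec Dp *.
  set Dj := Dl k in Djp *.
  have hq0 : 0 <= q * (D * D) by nra.
  have rr : rk1 <= rk by rewrite /rk /rk1; lra.
  case: (Rle_lt_or_eq_dec _ _ rr) => [rlt|req]; last first.
    rewrite req Rminus_diag_eq // Rmult_0_r Rplus_0_r.
    have : D * D <= 0 by rewrite /rk /rk1 in req; nra.
    nra.
  have rkp : 0 < rk by rewrite /rk /rk1 in rlt *; lra.
  have KI := KLI (x (S k)) (h (x (S k))) hball (f_inC (inC k)) ltac:(rewrite /rk in rkp; lra)
     (Heta _ re) (vv k) (frechet_limiting (vv_frechet k)).
  rewrite -/rk in KI.
  have [pd [_ ppos]] := phider rk rkp (Heta _ re).
  have tg := concave_tangent conc pd (s := rk1) (t := rk) ltac:(rewrite /rk1; lra) (Heta _ r1e)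
     ltac:(lra) (Heta _ re) rlt.
  have vb := vv_bound k.
  rewrite -/Dj in vb.
  set p := phi' rk in KI ppos tg.
  set V := vnorm (vv k) in KI vb.
  set W := (L + cA / lam k) * Dj in vb.
  have Vp : 0 <= V by apply vnorm_ge0.
  set T := phi rk - phi rk1.
  have hd' : q * (D * D) <= rk - rk1 by rewrite /rk /rk1; lra.
  have T1 : p * (q * (D * D)) <= T.
    have := Rmult_le_compat_l p _ _ (Rlt_le _ _ ppos) hd'.
    rewrite /T; lra.
  have Tp : 0 <= T by nra.
  have pW : 1 <= p * W by have := Rmult_le_compat_l p _ _ (Rlt_le _ _ ppos) vb; lra.
  have s1 : q * (D * D) <= q * (D * D) * (p * W).
    have := Rmult_le_compat_l _ _ _ hq0 pW; lra.
  have s2 : q * (D * D) * (p * W) <= T * W.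
    have Wp : 0 <= W by lra.
    nra.
  have hb1 : lam (S k) * W <= b * Dj.
    rewrite /W -Rmult_assoc; apply Rmult_le_compat_r => //; apply hbk.
  have s3 : acoef * (D * D) <= T * (b * Dj).
    have eq1 : acoef * (D * D) = lam (S k) * (q * (D * D)) by rewrite /q; field; lra.
    rewrite eq1.
    have := Rmult_le_compat_l (lam (S k)) _ _ (Rlt_le _ _ l0) (Rle_trans _ _ _ s1 s2).
    have := Rmult_le_compat_l T _ _ Tp hb1.
    nra.
  apply amgm => //; first by apply Rmult_le_pos.
  have : D * D <= beta * T * Dj.
    rewrite /beta.
    apply (Rmult_le_reg_l acoef) => //.
    have -> : acoef * (b / acoef * T * Dj) = T * (b * Dj) by field; lra.
    done.
  lra.
have bp1 : 0 < beta + 1 by lra.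
have e3p : 0 < delta / 3 / (beta + 1) by apply Rdiv_lt_0_compat => //; lra.
have [dph [dphp Hph]] := phicont 0 (Rle_refl 0) (Heta 0 etap) _ e3p.
have [K1 HK1] := r_to0 (Rmin dph etar) (Rmin_pos _ _ dphp etap).
have d3 : 0 < delta / 3 by lra.
have [j [hj [hx hD]]] := clus (delta / 3) (K0 + K1)%coq_nat d3.
have Phip : forall k, (S K0 <= k)%coq_nat -> 0 <= Phi k.
  move=> k hk; have [k' ek] : exists k', k = S k' by exists (Nat.pred k); lia.
  subst k; rewrite /Phi; apply phipos; first by have := hs_le k'; lra.
  by apply Heta, HK0; lia.
have start : vnorm (vsub (x (S (S j))) xs) + Dl (S j) + beta * Phi (S (S j)) < delta.
  have r0 := hs_le (S j).
  have r1 := HK1 (S j) ltac:(lia).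
  have m1 := Rmin_l dph etar; have m2 := Rmin_r dph etar.
  have t0 : 0 <= h (x (S (S j))) - hs by lra.
  have t1 : h (x (S (S j))) - hs < etar by lra.
  have t2 : Rabs (h (x (S (S j))) - hs - 0) < dph by rewrite Rminus_0_r Rabs_right; lra.
  have := Hph (h (x (S (S j))) - hs) t0 (Heta _ t1) t2.
  rewrite phi0 Rminus_0_r => hp.
  have pp : 0 <= Phi (S (S j)) by apply Phip; lia.
  have : Phi (S (S j)) < delta / 3 / (beta + 1).
    by rewrite /Phi; have := Rle_abs (phi (h (x (S (S j))) - hs)); lra.
  move=> hlt.
  have : beta * Phi (S (S j)) < delta / 3.
    have := Rmult_lt_compat_l (beta + 1) _ _ bp1 hlt.
    have -> : (beta + 1) * (delta / 3 / (beta + 1)) = delta / 3 by field; lra.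
    nra.
  lra.
have Hbd := ball_induction (xx := x) (Dl := Dl) (Phi := Phi) (xs := xs) (delta := delta) (beta := beta) (K := S j)
  (fun k => Rle_refl _) Dl_ge0 betap (fun k hk => Phip k ltac:(lia))
  (fun k hk hb => step k ltac:(lia) hb) start.
set Bd := psum Dl (S (S j)) + Dl (S j) + beta * Phi (S (S j)) in Hbd.
have gr : Un_growing (fun n => sum_f_R0 Dl n).
  by move=> n /=; have := Dl_ge0 (S n); lra.
have ub : has_ub (fun n => sum_f_R0 Dl n).
  by exists Bd => y [i ->]; rewrite psum_sum; apply Hbd.
have [l Hl] := growing_cv _ gr ub.
split; first by exists l; exact Hl.
exists xs; split => //.
move=> e ep.
have e4 : 0 < e / 4 by lra.
have [K2 HK2] := Hl _ e4.
exists (S K2) => k /leP hk.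
have [k' ek] : exists k', k = S k' by exists (Nat.pred k); lia.
subst k.
have [j2 [hj2 [hx2 _]]] := clus (e / 2) k' ltac:(lra).
have pb := path_bound (xx := x) (Dl := Dl) (fun k => Rle_refl _) (k := S k') (m := S (S j2)) ltac:(lia).
rewrite -!psum_sum in pb.
have a1 := HK2 k' ltac:(lia).
have a2 := HK2 (S j2) ltac:(lia).
rewrite /R_dist in a1 a2.
move/Rabs_lt_between: a1 => a1; move/Rabs_lt_between: a2 => a2.
have := @vnorm_tri _ (x (S k')) (x (S (S j2))) xs.
rewrite vnorm_sub_sym in pb.
lra.
Qed.

End Algo.

Theorem mainTheorem15 (N : nat) (C : vec N -> Prop) (h : vec N -> R)
  (gradh : vec N -> vec N) (L eps lambar : R) (lam : nat -> R)
  (x : nat -> vec N) (H P : nat -> mat N) (d : nat -> vec N) :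
  closed_vset C -> (exists c, C c) ->
  (forall z, has_gradient h z (gradh z)) -> 0 < L -> lipschitz gradh L ->
  KL (h_plus_ind h C) ->
  0 < eps ->
  (exists B, forall k, vnorm (x k) <= B) ->
  (* H_k in the generalized Hessian, P_k = proj_{S_+}(H_k), A_k = P_k + eps I *)
  (forall k, clarke_hessian gradh (x k) (H k)) ->
  (forall k, is_proj_psd (H k) (P k)) ->
  (* d_k = A_k^{-1} grad h(x^k) *)
  (forall k i, mulmv (madd (P k) (mscale eps (@idm N))) (d k) i = gradh (x k) i) ->
  (forall k, in_proj_A C (madd (P k) (mscale eps (@idm N)))
                 (vsub (x k) (vscale (lam k) (d k))) (x (S k))) ->
  (forall k, 0 < lam k <= lambar) -> lambar < eps / L ->
  ~ (exists l, infinite_sum lam l) ->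
  (exists M, forall k, lam (S k) / lam k <= M) ->
  (exists l, infinite_sum (fun k => vnorm (vsub (x (S k)) (x k))) l) /\
  (exists xs, vconv x xs /\ critical (h_plus_ind h C) xs).
Proof.
move=> hC _ hg Lp lip hKL epsp hB hH hP hd hproj hlam hlamb hnsum hM.
exact: (main_result hg Lp lip epsp hH hP hd hproj hlam hlamb hC hB hnsum hM hKL).
Qed.
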